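(* Let $G$ be a planar PCC graph, $\sigma$ a face with $|\sigma|=N\ge42$, and let $A_1,A_5,A_6,\mathcal T,C_1$ and $\tau_v$ ($v\in C_1$) be as in the context. Define $C_{15}=\{v\in C_1:\ \tau_v\text{ has vertices }v,v_1,v_2\text{ with }v_1\in A_1,\ v_2\in A_5\}$, $C_{16}=\{v\in C_1:\ \tau_v\text{ has vertices }v,v_1,v_2\text{ with }v_1\in A_1,\ v_2\in A_6\}$, and let $D$ be the set of vertices $v$ for which there exists $v'\in C_{16}$ adjacent to $v$ such that the two faces on either side of the edge $vv'$ have sizes $5$ and $6$. Then $C_1\cap D\subseteq C_{15}$.
   Context: $G$ is a finite simple connected graph 2-cell embedded in the sphere; $|\sigma|$ is the boundary walk length of face $\sigma$; $f(v)$ is the multiset of sizes of faces incident to $v$ (one per corner), in nondecreasing order; $K(v)=1-\frac{\deg(v)}{2}+\sum_{\sigma\in F(v)}\frac1{|\sigma|}$. A prism (resp. antiprism) of order $N$ is the planar graph with $2N$ vertices, two $N$-faces and $N$ quadrilaterals (resp. $2N$ triangles), each vertex incident to two quadrilaterals and one $N$-face (resp. three triangles and one $N$-face). A planar PCC graph is such a $G$ with $K(v)>0$, $\deg(v)\ge3$ for all $v$, not a prism or antiprism. Given the face $\sigma$ with $|\sigma|=N$: $A_1,A_5,A_6$ are the sets of vertices $v$ on the boundary of $\sigma$ with $f(v)=(3,3,3,N)$, $(3,5,N)$, $(3,6,N)$ respectively; $\mathcal T$ is the set of triangles whose vertex set is $\{v,v_1,v_2\}$ with $v_1,v_2\in A_1\cup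 A_5\cup A_6$; $C_1$ is the set of vertices not on the boundary of $\sigma$ lying on some triangle of $\mathcal T$. For each $v\in C_1$ there is a unique $\tau_v\in\mathcal T$ containing $v$. *)

(* Defs.v *)
(* Plane graphs are encoded as combinatorial maps (rotation systems). *)
From HB Require Import structures.
From mathcomp Require Import all_boot all_order all_algebra all_fingroup.
Set Implicit Arguments. Unset Strict Implicit. Unset Printing Implicit Defensive.
Import Order.TTheory GRing.Theory Num.Theory.

Section Map.
(* Darts D; [ne] rotates the darts around their common vertex (cyclic order of
   the embedding); [ed] is the fixed-point-free involution exchanging the two
   darts (half-edges) of an edge.  Vertices = orbits of [ne], edges = orbits of
   [ed], faces = orbits of [phi := ne \o ed] (standard face permutation).
   A vertex is represented by any of its darts. *)
Variables (D : finType) (ne ed : {perm D}).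

Definition phi (x : D) : D := ne (ed x).

Definition sameV (x y : D) : bool := fconnect ne x y.
Definition inFace (x y : D) : bool := fconnect phi x y.

Definition deg (v : D) : nat := fingraph.order ne v.
Definition fsize (x : D) : nat := fingraph.order phi x.
Definition fmult (v : D) : seq nat := [seq fsize x | x <- fingraph.orbit ne v].

Definition curv (v : D) : rat :=
  (1 - (deg v)%:R / 2 + \sum_(x <- fingraph.orbit ne v) ((fsize x)%:R)^-1)%R.

Definition nverts : nat := fcard ne D.
Definition nedges : nat := fcard ed D.
Definition nfaces : nat := fcard phi D.

Definition simple_connected_spherical_map : Prop :=
  [/\ (forall x, ed (ed x) = x) /\ (forall x, ed x != x),
      (forall x, ~~ sameV x (ed x)),
      (forall x y, sameV x y -> sameV (ed x) (ed y) -> x = y),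
      (forall x y, connect (fun a b => (b == ed a) || (b == ne a)) x y)
    & (* genus 0 (Euler's formula) *)
      nverts + nfaces = nedges + 2].

Definition is_prism : Prop :=
  exists N, [/\ 3 <= N, nverts = 2 * N & forall v, perm_eq (fmult v) [:: 4; 4; N]].
Definition is_antiprism : Prop :=
  exists N, [/\ 3 <= N, nverts = 2 * N & forall v, perm_eq (fmult v) [:: 3; 3; 3; N]].

Definition planar_PCC : Prop :=
  [/\ simple_connected_spherical_map,
      (forall v, (0 < curv v)%R /\ 3 <= deg v),
      ~ is_prism & ~ is_antiprism].

(* The distinguished face sigma is represented by one of its darts s. *)
Variable s : D.
Let N := fsize s.

Definition onSigma (v : D) : Prop := exists x, sameV v x /\ inFace s x.

Definition A1 (v : D) : Prop := onSigma v /\ perm_eq (fmult v) [:: 3; 3; 3; N].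
Definition A5 (v : D) : Prop := onSigma v /\ perm_eq (fmult v) [:: 3; 5; N].
Definition A6 (v : D) : Prop := onSigma v /\ perm_eq (fmult v) [:: 3; 6; N].
Definition A156 (v : D) : Prop := A1 v \/ A5 v \/ A6 v.

Definition inT (t : D) : Prop :=
  fsize t = 3 /\
  exists a b, [/\ inFace t a, inFace t b, ~~ sameV a b, A156 a & A156 b].

Definition faceHasV (t v : D) : Prop := exists c, inFace t c /\ sameV c v.

Definition C1 (v : D) : Prop := ~ onSigma v /\ exists t, inT t /\ faceHasV t v.

(* tau_v (the unique triangle of T containing v) has its two other vertices
   in A1 and A5 (resp. A6) *)
Definition C15 (v : D) : Prop :=
  C1 v /\ forall t, inT t -> faceHasV t v ->
    exists a b, [/\ inFace t a, inFace t b, A1 a & A5 b].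
Definition C16 (v : D) : Prop :=
  C1 v /\ exists t, [/\ inT t, faceHasV t v &
    exists a b, [/\ inFace t a, inFace t b, A1 a & A6 b]].

Definition Dset (v : D) : Prop :=
  exists x, [/\ sameV v x, C16 (ed x) &
    ((fsize x == 5) && (fsize (ed x) == 6)) || ((fsize x == 6) && (fsize (ed x) == 5))].

End Map.

(* Main.v *)
Require Import Defs.
From mathcomp Require Import all_boot all_order all_algebra all_fingroup.
From mathcomp Require Import lra zify.
Import Order.TTheory GRing.Theory Num.Theory.

Arguments fsize : simpl never.
Arguments deg : simpl never.
Local Open Scope ring_scope.
Definition iv (n : nat) : rat := (n%:R)^-1.

Lemma ivb (m n : nat) : (0 < m)%N -> (m <= n)%N -> m%:R * iv n <= 1.
Proof.
move=> m0 mn; rewrite /iv.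
have n0 : (0 < n)%N by apply: leq_trans mn.
rewrite mulrC ler_pdivrMl ?ltr0n // mulr1 ler_nat //.
Qed.

Local Close Scope ring_scope.

Section Basics.
Variables (D : finType) (ne ed : {perm D}).
Local Notation ph := (phi ne ed).
Local Notation fs := (fsize ne ed).
Local Notation sV := (sameV ne).
Local Notation iF := (inFace ne ed).
Local Notation dg := (deg ne).

Lemma ph_inj : injective ph.
Proof. by move=> x y; rewrite /phi => /perm_inj/perm_inj. Qed.

Lemma order_conn (f : D -> D) (injf : injective f) x y :
  fconnect f x y -> fingraph.order f y = fingraph.order f x.
Proof.
move=> H; apply: (eq_order_cycle (cycle_orbit injf x)).
  exact: in_orbit. by rewrite -fconnect_orbit.
Qed.

Lemma sV_sym x y : sV x y = sV y x.
Proof. exact: (fconnect_sym (@perm_inj _ ne)). Qed.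
Lemma sV_trans x y z : sV x y -> sV y z -> sV x z.
Proof. exact: connect_trans. Qed.
Lemma sV_ne x : sV x (ne x). Proof. exact: fconnect1. Qed.
Lemma sV_refl x : sV x x. Proof. exact: connect0. Qed.
Lemma iF_sym x y : iF x y = iF y x.
Proof. exact: (fconnect_sym ph_inj). Qed.
Lemma iF_trans x y z : iF x y -> iF y z -> iF x z.
Proof. exact: connect_trans. Qed.
Lemma iF_ph x : iF x (ph x). Proof. exact: fconnect1. Qed.

Lemma fs_conn x y : iF x y -> fs y = fs x.
Proof. exact: order_conn ph_inj x y. Qed.
Lemma fs_ph x : fs (ph x) = fs x.
Proof. exact: fs_conn (iF_ph x). Qed.
Lemma dg_conn x y : sV x y -> dg y = dg x.
Proof. exact: order_conn (@perm_inj _ ne) x y. Qed.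

Lemma iter_fs x : iter (fs x) ph x = x.
Proof. exact: (iter_order ph_inj). Qed.
Lemma iter_dg x : iter (dg x) ne x = x.
Proof. exact: (iter_order (@perm_inj _ ne)). Qed.

Lemma in_trajV x y : sV x y -> y \in traject ne x (dg x).
Proof. by rewrite /sameV fconnect_orbit. Qed.
Lemma in_trajF x y : iF x y -> y \in traject ph x (fs x).
Proof. by rewrite /inFace fconnect_orbit. Qed.

Lemma dg_uniq x : uniq (traject ne x (dg x)).
Proof. exact: orbit_uniq. Qed.

Lemma ne1 x : 2 <= dg x -> ne x != x.
Proof.
move: (dg_uniq x); case: (dg x) => [|[|k]] //= /andP[H _] _.
by apply: contraNneq H => ->; rewrite inE eqxx.
Qed.
Lemma ne2 x : 3 <= dg x -> ne (ne x) != x.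
Proof.
move: (dg_uniq x); case: (dg x) => [|[|[|k]]] //= /andP[H _] _.
by apply: contraNneq H => ->; rewrite !inE eqxx orbT.
Qed.


Hypothesis edK : forall x, ed (ed x) = x.
Hypothesis loopf : forall x, ~~ sV x (ed x).
Hypothesis multi : forall x y, sV x y -> sV (ed x) (ed y) -> x = y.
Hypothesis degH : forall z, 3 <= dg z.

Lemma ne_ph_ed x : ne x = ph (ed x).
Proof. by rewrite /phi edK. Qed.
Lemma fs_ed_ne x : fs (ed x) = fs (ne x).
Proof. by rewrite ne_ph_ed fs_ph. Qed.

Lemma fs3 x : 3 <= fs x.
Proof.
have := iter_fs x; have := fingraph.order_gt0 ph x.
rewrite -/(fsize ne ed x).
case: (fs x) => [|[|[|k]]] //= _.
- rewrite /phi => H.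
  have : sV (ed x) x by rewrite -{2}H sV_ne.
  by rewrite sV_sym => H'; have := loopf x; rewrite H'.
- rewrite /phi => H.
  have E : ed x = ne (ed x).
    apply: multi; first exact: sV_ne.
    rewrite edK sV_sym; set y := ed (ne (ed x)); rewrite -H; exact: sV_ne.
  by move: (ne1 (ed x)) ; rewrite -E eqxx; move/(_ (leq_trans _ (degH _))); apply.
Qed.


Hypothesis curvH : forall z, (0 < curv ne ed z)%R.
Local Open Scope ring_scope.

Lemma curv_exp x : curv ne ed x = 1 - (dg x)%:R / 2 + \sum_(y <- traject ne x (dg x)) iv (fs y).
Proof. by []. Qed.

Lemma curv3 x : dg x = 3%N -> curv ne ed x =
  1 - 3%:R/2 + (iv (fs x) + (iv (fs (ne x)) + (iv (fs (ne (ne x))) + 0))).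
Proof. by move=> H; rewrite curv_exp H /= !big_cons big_nil. Qed.
Lemma curv4 x : dg x = 4%N -> curv ne ed x =
  1 - 4%:R/2 + (iv (fs x) + (iv (fs (ne x)) + (iv (fs (ne (ne x))) +
   (iv (fs (ne (ne (ne x)))) + 0)))).
Proof. by move=> H; rewrite curv_exp H /= !big_cons big_nil. Qed.
Lemma curv5 x : dg x = 5%N -> curv ne ed x =
  1 - 5%:R/2 + (iv (fs x) + (iv (fs (ne x)) + (iv (fs (ne (ne x))) +
   (iv (fs (ne (ne (ne x)))) + (iv (fs (ne (ne (ne (ne x))))) + 0))))).
Proof. by move=> H; rewrite curv_exp H /= !big_cons big_nil. Qed.

Lemma sum_iv_le (l : seq D) : \sum_(y <- l) iv (fs y) <= (size l)%:R / 3.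
Proof.
elim: l => [|y l IH]; first by rewrite big_nil.
rewrite big_cons /= -addn1 natrD.
have := ivb 3 (fs y) isT (fs3 y).
lra.
Qed.

Lemma dg_le5 x : (dg x <= 5)%N.
Proof.
have := curvH x; rewrite curv_exp.
have := sum_iv_le (traject ne x (dg x)); rewrite size_traject.
move=> H1 H2.
have : (dg x)%:R < 6%:R :> rat by lra.
by rewrite ltr_nat.
Qed.


Lemma ivb4 y : fs y != 3%N -> 4%:R * iv (fs y) <= 1.
Proof. by move=> H; apply: ivb => //; have := fs3 y; rewrite leq_eqVlt eq_sym (negbTE H). Qed.
Lemma ivbe y k : fs y = k -> (0 < k)%N -> k%:R * iv (fs y) <= 1.
Proof. by move=> H k0; apply: ivb => //; rewrite H. Qed.

Ltac bnd := repeat match goal with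
 | |- context[iv (fsize ne ed ?y)] =>
   let b := fresh "b" in
   first [ match goal with H : fsize ne ed y = ?k |- _ => have b := ivbe _ _ H isT end
         | match goal with H : is_true (leq ?k (fsize ne ed y)) |- _ => have b := ivb k (fsize ne ed y) isT H end
         | match goal with H : is_true (fsize ne ed y != 3%N) |- _ => have b := ivb4 _ H end
         | have b := ivb 3 (fsize ne ed y) isT (fs3 y) ];
   move: b; generalize (iv (fsize ne ed y)); intros ? ?
 end.

Ltac finlra := move=> ?;
  repeat match goal with
  | H : is_true (leq _ _) |- _ => clear H
  | H : @eq ?T _ _ |- _ => lazymatch T with rat => fail | _ => clear H end
  | H : is_true (_ != _) |- _ => clear H
  | H : ~ _ |- _ => clear H
  end; lra.

Ltac curvcase r :=
  have := dg_le5 r; have := degH r; let E := fresh "E" in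
  case E: (dg r) => [|[|[|[|[|[|k]]]]]] // _ _;
  [ move: (curvH r); rewrite (curv3 r E)
  | move: (curvH r); rewrite (curv4 r E)
  | move: (curvH r); rewrite (curv5 r E) ].

Lemma K1 r : (42 <= fs r)%N -> (42 <= fs (ne (ne r)))%N -> False.
Proof. by move=> ? ?; curvcase r; bnd; finlra. Qed.


Lemma K3 x : ((42 <= fs x)%N /\ fs (ne x) = 6%N) \/ (fs x = 6%N /\ (42 <= fs (ne x))%N) ->
  ne (ne (ne x)) = x /\ fs (ne (ne x)) = 3%N.
Proof.
move=> H; have := iter_dg x; curvcase x.
- move=> Hc Hit; split; first by [].
  apply/eqP/negPn/negP => Hn; move: Hc.
  by case: H => [[? ?]|[? ?]]; bnd; finlra.
- move=> Hc _; exfalso; move: Hc.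
  by case: H => [[? ?]|[? ?]]; bnd; finlra.
- move=> Hc _; exfalso; move: Hc.
  by case: H => [[? ?]|[? ?]]; bnd; finlra.
Qed.


Lemma hex c c' w : fs (ed c) = 6%N -> ne (ne (ne (ed c))) = ed c ->
  (42 <= fs (ne (ne (ed c))))%N -> ph (ne c) = w -> ne w = c' -> fs c' = 3%N ->
  ne (ne (ne (ph (ph c')))) = ph (ph c') -> (42 <= fs (ne (ne (ph (ph c')))))%N -> False.
Proof.
move=> H6 Hu1 Hs1 Hw Hwc Hc3 Hp3 Hsp.
set p := ph (ph c') in Hp3 Hsp.
have c3 : ph p = c' by have := iter_fs c'; rewrite Hc3.
have edp : ed p = w by apply: (@perm_inj _ ne); rewrite Hwc -c3.
have edw : ed w = p by rewrite -edp edK.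
set e0 := ed c.
have e1E : ph e0 = ne c by rewrite /phi /e0 edK.
have Hit := iter_fs e0; rewrite H6 /= e1E Hw in Hit.
have e3E : ph w = ne p by rewrite /phi edw.
set e4 := ph (ph w) in Hit.
set e5 := ph e4 in Hit.
have fs4 : fs e4 = 6%N by rewrite /e4 !fs_ph -Hw fs_ph -e1E fs_ph.
have fs5 : fs e5 = 6%N by rewrite /e5 fs_ph.
have ed5 : ed e5 = ne (ne e0).
  by apply: (@perm_inj _ ne); rewrite -/(ph e5) Hit Hu1.
set a := ed (ph w).
have neA : ne a = e4 by [].
have fsA : (42 <= fs a)%N by rewrite /a fs_ed_ne e3E.
have [a3 fsa2] : ne (ne (ne a)) = a /\ fs (ne (ne a)) = 3%N.
  by apply: K3; left; rewrite neA fs4.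
have [b3 fsb2] : ne (ne (ne e5)) = e5 /\ fs (ne (ne e5)) = 3%N.
  by apply: K3; right; rewrite -fs_ed_ne ed5 fs5.
have ed4 : ed e4 = ne (ne e5).
  by apply: (@perm_inj _ ne); rewrite -/(ph e4) -/e5 b3.
have phb : ph (ne (ne e5)) = ne (ne a) by rewrite /phi -ed4 edK neA.
have phq : ph (ph (ne (ne a))) = ne (ne e5).
  by have := iter_fs (ne (ne e5)); rewrite fsb2 /= phb.
have edq : ed (ph (ne (ne a))) = ne e5.
  by apply: (@perm_inj _ ne); rewrite -/(ph (ph (ne (ne a)))) phq.
apply: (K1 (ed (ne (ne a)))).
  by rewrite fs_ed_ne a3.
rewrite -/(ph (ne (ne a))) -fs_ed_ne edq -fs_ed_ne ed5.
exact: Hs1.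
Qed.


Variable s : D.
Set Implicit Arguments. Unset Strict Implicit.
Arguments in_trajV {x y}.
Arguments in_trajF {x y}.
Arguments fs_conn {x y}.
Hypothesis N42 : (42 <= fs s)%N.
Local Notation A1 := (Defs.A1 ne ed s).
Local Notation A5 := (Defs.A5 ne ed s).
Local Notation A6 := (Defs.A6 ne ed s).
Local Notation A156 := (Defs.A156 ne ed s).

Lemma fmultE u : fmult ne ed u = map fs (traject ne u (dg u)).
Proof. by []. Qed.

Lemma size_fmult u : size (fmult ne ed u) = dg u.
Proof. by rewrite fmultE size_map size_traject. Qed.

Lemma A1_dg u : A1 u -> dg u = 4%N.
Proof. by case=> _ /perm_size; rewrite size_fmult. Qed.
Lemma A5_dg u : A5 u -> dg u = 3%N.
Proof. by case=> _ /perm_size; rewrite size_fmult. Qed.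
Lemma A6_dg u : A6 u -> dg u = 3%N.
Proof. by case=> _ /perm_size; rewrite size_fmult. Qed.
Lemma A56 u : A5 u -> A6 u -> False.
Proof.
case=> _ H5 [_ H6]; rewrite perm_sym in H5; move: (perm_trans H5 H6).
move/seq.permP/(_ (pred1 5%N)) => /=.
by case: eqP => ? /=; lia.
Qed.

Lemma onSig_fs u : onSigma ne ed s u -> exists y, [/\ sV u y, iF s y & fs y = fs s].
Proof. by case=> y [H1 H2]; exists y; split => //; apply: fs_conn. Qed.

Lemma A_onSig u : A156 u -> onSigma ne ed s u.
Proof. by case=> [[]|[[]|[]]]. Qed.

Definition TL u z :=
  (A1 u /\ fs z = 3%N) \/
  (A5 u /\ fs z = 5%N /\ ne (ne (ne u)) = u /\ fs (ne u) = fs s) \/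
  (A6 u /\ fs z = 6%N /\ ne (ne (ne u)) = u /\ fs (ne u) = fs s).
Definition TR u z :=
  (A1 u /\ fs z = 3%N) \/
  (A5 u /\ fs z = 5%N /\ ne (ne (ne u)) = u /\ fs (ne (ne u)) = fs s) \/
  (A6 u /\ fs z = 6%N /\ ne (ne (ne u)) = u /\ fs (ne (ne u)) = fs s).

Lemma TyL u z : ne z = u -> fs u = 3%N -> ~ iF s z -> A156 u -> TL u z.
Proof.
move=> Hz Hu Hn HA; have [y [Hy1 Hy2 Hy3]] := onSig_fs (A_onSig HA).
have Hit := iter_dg u; have Hy := in_trajV Hy1.
case: HA => [HA|[HA|HA]].
- left; split => //; have := A1_dg HA; move: HA => [_ Hp] E.
  rewrite E /= in Hit; rewrite fmultE E /= in Hp.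
  have Ez : z = ne (ne (ne u)) by apply: (@perm_inj _ ne); rewrite Hz.
  rewrite E /= !inE in Hy; subst z.
  move/seq.permP/(_ (pred1 3%N)): Hp => /=.
  case/or4P: Hy => /eqP ?; subst y => //; try lia.
- right; left; have := A5_dg HA; move: (HA) => [_ Hp] E.
  rewrite E /= in Hit; rewrite fmultE E /= in Hp.
  have Ez : z = ne (ne u) by apply: (@perm_inj _ ne); rewrite Hz.
  rewrite E /= !inE in Hy; subst z.
  case/or3P: Hy => /eqP ?; subst y => //; try lia.
  move/seq.permP/(_ (pred1 5%N)): Hp => /= Hc.
  split; first exact: HA.
  split; first lia.
  by split.
- right; right; have := A6_dg HA; move: (HA) => [_ Hp] E.
  rewrite E /= in Hit; rewrite fmultE E /= in Hp.
  have Ez : z = ne (ne u) by apply: (@perm_inj _ ne); rewrite Hz.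
  rewrite E /= !inE in Hy; subst z.
  case/or3P: Hy => /eqP ?; subst y => //; try lia.
  move/seq.permP/(_ (pred1 6%N)): Hp => /= Hc.
  split; first exact: HA.
  split; first lia.
  by split.
Qed.


Lemma TyR u z : z = ne u -> fs u = 3%N -> ~ iF s z -> A156 u -> TR u z.
Proof.
move=> Hz Hu Hn HA; have [y [Hy1 Hy2 Hy3]] := onSig_fs (A_onSig HA).
have Hit := iter_dg u; have Hy := in_trajV Hy1.
subst z.
case: HA => [HA|[HA|HA]].
- left; split => //; have := A1_dg HA; move: HA => [_ Hp] E.
  rewrite E /= in Hit; rewrite fmultE E /= in Hp.
  rewrite E /= !inE in Hy.
  move/seq.permP/(_ (pred1 3%N)): Hp => /=.
  case/or4P: Hy => /eqP ?; subst y => //; try lia.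
- right; left; have := A5_dg HA; move: (HA) => [_ Hp] E.
  rewrite E /= in Hit; rewrite fmultE E /= in Hp.
  rewrite E /= !inE in Hy.
  case/or3P: Hy => /eqP ?; subst y => //; try lia.
  move/seq.permP/(_ (pred1 5%N)): Hp => /= Hc.
  split; first exact: HA.
  split; first lia.
  by split.
- right; right; have := A6_dg HA; move: (HA) => [_ Hp] E.
  rewrite E /= in Hit; rewrite fmultE E /= in Hp.
  rewrite E /= !inE in Hy.
  case/or3P: Hy => /eqP ?; subst y => //; try lia.
  move/seq.permP/(_ (pred1 6%N)): Hp => /= Hc.
  split; first exact: HA.
  split; first lia.
  by split.
Qed.


Lemma onSig_sV x y : sV x y -> onSigma ne ed s y -> onSigma ne ed s x.
Proof. by move=> H [w [H1 H2]]; exists w; split => //; apply: sV_trans H H1. Qed.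

Lemma ph3 c : fs c = 3%N -> ph (ph (ph c)) = c.
Proof. by move=> H; have := iter_fs c; rewrite H. Qed.

Lemma inTri t c a : iF t c -> fs t = 3%N -> ~ onSigma ne ed s c -> iF t a ->
  onSigma ne ed s a -> a = ph c \/ a = ph (ph c).
Proof.
move=> Htc Ht Hc Hta Ha.
have Hca : iF c a by apply: iF_trans Hta; rewrite iF_sym.
have fc : fs c = 3%N by rewrite (fs_conn Htc).
have := in_trajF Hca; rewrite fc /= !inE => /or3P[] /eqP E; [|by left|by right].
by exfalso; apply: Hc; rewrite -E.
Qed.

Lemma tri t c : iF t c -> fs t = 3%N -> ~ onSigma ne ed s c ->
  (exists a b, [/\ iF t a, iF t b, ~~ sV a b, A156 a & A156 b]) ->
  [/\ fs c = 3%N, ph (ph (ph c)) = c,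
      TL (ph c) (ed c) & TR (ph (ph c)) (ne (ph (ph c)))].
Proof.
move=> Htc Ht Hc [a [b [Ha Hb Hab HAa HAb]]].
have fc : fs c = 3%N by rewrite (fs_conn Htc).
have c3 := ph3 fc.
have [A1' A2'] : A156 (ph c) /\ A156 (ph (ph c)).
  have := inTri Htc Ht Hc Ha (A_onSig HAa).
  have := inTri Htc Ht Hc Hb (A_onSig HAb).
  by case=> Eb [] Ea; subst a b; rewrite ?sV_refl in Hab.
have fu1 : fs (ph c) = 3%N by rewrite fs_ph.
have fu2 : fs (ph (ph c)) = 3%N by rewrite !fs_ph.
split => //.
- apply: TyL => //.
  move=> H; apply: Hc; exists (ne c); split; first exact: sV_ne.
  apply: iF_trans H _; have -> : ne c = ph (ed c) by rewrite /phi edK.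
  exact: iF_ph.
- apply: TyR => //.
  move=> H; apply: Hc; exists (ed (ph (ph c))); split.
    by rewrite sV_sym -{2}c3; exact: sV_ne.
  apply: iF_trans H _; rewrite ne_ph_ed iF_sym; exact: iF_ph.
Qed.


Lemma VL c x w : fs c = 3%N -> ne w = c -> sV c x ->
  ((fs x = 5%N /\ fs (ne x) = 6%N) \/ (fs x = 6%N /\ fs (ne x) = 5%N)) ->
  (x = ne c /\ (ne x = w \/ fs w = 3%N)) \/ (ne x = w /\ fs (ne c) = 3%N).
Proof.
move=> Hc Hw Hcx Hs.
have Hx := in_trajV Hcx; have Hit := iter_dg c.
move: Hx Hit; curvcase c; move=> + Hx Hit; rewrite !inE in Hx; simpl in Hit.
- have Ew : w = ne (ne c) by apply: (@perm_inj _ ne); rewrite Hw.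
  subst w.
  case/or3P: Hx => /eqP ?; subst x; case: Hs => [[H1 H2]|[H1 H2]]; rewrite ?Hit in H1 H2;
    try lia; move=> _; left; (split; [reflexivity | left; reflexivity]).
- have Ew : w = ne (ne (ne c)) by apply: (@perm_inj _ ne); rewrite Hw Hit.
  subst w.
  case/or4P: Hx => /eqP ?; subst x; case: Hs => [[H1 H2]|[H1 H2]]; rewrite ?Hit in H1 H2;
    try lia.
  + move=> Hcv; left; split; first reflexivity; right.
    apply/eqP/negPn/negP => Hn; move: Hcv; bnd; finlra.
  + move=> Hcv; left; split; first reflexivity; right.
    apply/eqP/negPn/negP => Hn; move: Hcv; bnd; finlra.
  + move=> Hcv; right; split; first reflexivity.
    apply/eqP/negPn/negP => Hn; move: Hcv; bnd; finlra.
  + move=> Hcv; right; split; first reflexivity.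
    apply/eqP/negPn/negP => Hn; move: Hcv; bnd; finlra.
- move=> Hcv; exfalso; move: Hcv.
  move: Hx => /orP[/eqP ?|/or4P[] /eqP ?]; subst x; case: Hs => [[H1 H2]|[H1 H2]]; rewrite ?Hit in H1 H2;
    try lia; bnd; finlra.
Qed.


Lemma hexT c c' w : TL (ph c) (ed c) -> fs (ed c) = 6%N -> ph (ne c) = w -> ne w = c' ->
  fs c' = 3%N -> TR (ph (ph c')) (ne (ph (ph c'))) -> fs (ne (ph (ph c'))) = 6%N -> False.
Proof.
move=> T1 f1 Hw Hwc fc T2 f2.
case: T1 => [[_ ?]|[[_ [? _]]|[_ [_ [u3 u1]]]]]; try lia.
case: T2 => [[_ ?]|[[_ [? _]]|[_ [_ [p3 p1]]]]]; try lia.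
apply: (@hex _ _ _ f1 _ _ Hw Hwc fc p3); last by rewrite p1.
- apply: (@perm_inj _ ne); change (ne (ne (ne (ph c))) = ph c); exact: u3.
- by change (42 <= fs (ne (ph c)))%N; rewrite u1.
Qed.


Lemma good_conc t0 c : iF t0 c -> TL (ph c) (ed c) -> TR (ph (ph c)) (ne (ph (ph c))) ->
  ((fs (ed c) = 3%N /\ fs (ne (ph (ph c))) = 5%N) \/ (fs (ed c) = 5%N /\ fs (ne (ph (ph c))) = 3%N)) ->
  exists a b, [/\ iF t0 a, iF t0 b, A1 a & A5 b].
Proof.
move=> Hc T1 T2 Hf.
have i1 : iF t0 (ph c) by apply: iF_trans Hc (iF_ph c).
have i2 : iF t0 (ph (ph c)) by apply: iF_trans i1 (iF_ph _).
case: Hf => [[f1 f2]|[f1 f2]].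
- case: T1 => [[A _]|[[_ [? _]]|[_ [? _]]]]; try lia.
  case: T2 => [[_ ?]|[[B _]|[_ [? _]]]]; try lia.
  by exists (ph c), (ph (ph c)).
- case: T1 => [[_ ?]|[[B _]|[_ [? _]]]]; try lia.
  case: T2 => [[A _]|[[_ [? _]]|[_ [? _]]]]; try lia.
  by exists (ph (ph c)), (ph c).
Qed.

Lemma A1_not x : A1 x -> A5 x \/ A6 x -> False.
Proof. by move=> /A1_dg E [/A5_dg|/A6_dg]; rewrite E. Qed.

Lemma main_sec v : C1 ne ed s v -> Dset ne ed s v -> C15 ne ed s v.
Proof.
move=> HC1 [x [Hvx HC16 Hsz]]; split => //.
move=> t0 [Ht3 Hab] [c [Htc Hcv]].
have Hnc : ~ onSigma ne ed s c.
  by move=> H; apply: HC1.1; apply: (onSig_sV _ H); rewrite sV_sym.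
have [fc c3 T1 T2] := tri Htc Ht3 Hnc Hab.
set w := ed (ph (ph c)).
have Hwc : ne w = c by rewrite -/(ph (ph (ph c))) c3.
have Hcx := @sV_trans c v x Hcv Hvx.
have Hs : (fs x = 5%N /\ fs (ne x) = 6%N) \/ (fs x = 6%N /\ fs (ne x) = 5%N).
  by rewrite -fs_ed_ne; case/orP: Hsz => /andP[/eqP -> /eqP ->]; auto.
have HV := VL fc Hwc Hcx Hs.
case: HC16 => [[Hnx _] [t' [[Ht3' Hab'] [c' [Htc' Hcx']] [a1 [b6 [Ha1 Hb6 HA1 HA6]]]]]].
have Hnc' : ~ onSigma ne ed s c' by move=> H; apply: Hnx; apply: (onSig_sV _ H); rewrite sV_sym.
have [fc' c3' T1' T2'] := tri Htc' Ht3' Hnc' Hab'.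
have G : (fs (ed c') = 3%N /\ fs (ne (ph (ph c'))) = 6%N) \/
         (fs (ed c') = 6%N /\ fs (ne (ph (ph c'))) = 3%N).
  have Oa := inTri Htc' Ht3' Hnc' Ha1 HA1.1.
  have Ob := inTri Htc' Ht3' Hnc' Hb6 HA6.1.
  case: Oa => ?; subst a1; case: Ob => ?; subst b6.
  - by exfalso; apply: (A1_not HA1); right.
  - left; split.
      case: T1' => [[_ H]|[[H _]|[H _]]]; [exact H | exfalso; apply: (A1_not HA1); left; exact H | exfalso; apply: (A1_not HA1); right; exact H].
    case: T2' => [[H _]|[[H _]|[_ [H _]]]]; [exfalso; apply: (A1_not H); right; exact HA6 | exfalso; exact: (A56 H HA6) | exact H].
  - right; split.
      case: T1' => [[H _]|[[H _]|[_ [H _]]]]; [exfalso; apply: (A1_not H); right; exact HA6 | exfalso; exact: (A56 H HA6) | exact H].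
    case: T2' => [[_ H]|[[H _]|[H _]]]; [exact H | exfalso; apply: (A1_not HA1); left; exact H | exfalso; apply: (A1_not HA1); right; exact H].
  - by exfalso; apply: (A1_not HA1); right.
set w' := ed (ph (ph c')).
have Hwc' : ne w' = c' by rewrite -/(ph (ph (ph c'))) c3'.
have Hs' : (fs (ed x) = 5%N /\ fs (ne (ed x)) = 6%N) \/ (fs (ed x) = 6%N /\ fs (ne (ed x)) = 5%N).
  by rewrite -[ne (ed x)]/(ph x) fs_ph fs_ed_ne; case: Hs => [[-> ->]|[-> ->]]; auto.
have HO := VL fc' Hwc' Hcx' Hs'.
have e1 := fs_ed_ne c; have e2 := fs_ed_ne (ph (ph c));
have e3 := fs_ed_ne c'; have e4 := fs_ed_ne (ph (ph c')); have e5 := fs_ed_ne x.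
have e6 : fs (ne (ed x)) = fs x by rewrite -[ne (ed x)]/(ph x) fs_ph.
rewrite -/w in e2; rewrite -/w' in e4.
case: HO => [[Ex' [Ex2|Hw3]]|[Ex2 Hc3]].
- have e7 : fs (ed x) = fs (ne c') by rewrite Ex'.
  have e8 : fs (ne (ed x)) = fs w' by rewrite Ex2.
  exfalso; lia.
- have e7 : fs (ed x) = fs (ne c') by rewrite Ex'.
  case: HV => [[Ex [Ex2|Hw3']]|[Ex2 Hc3']].
  + have e8 : fs x = fs (ne c) by rewrite Ex.
    have e9 : fs (ne x) = fs w by rewrite Ex2.
    exfalso; apply: (hexT T1' _ _ Hwc fc T2).
    * lia.
    * by rewrite -Ex' /phi edK.
    * lia.
  + have e8 : fs x = fs (ne c) by rewrite Ex.
    apply: (good_conc Htc T1 T2); right; lia.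
  + have e9 : fs (ne x) = fs w by rewrite Ex2.
    exfalso; apply: (hexT T1' _ _ Hwc fc T2).
    * lia.
    * by rewrite -Ex' /phi edK.
    * lia.
- have e7 : fs (ne (ed x)) = fs w' by rewrite Ex2.
  case: HV => [[Ex [Ex2'|Hw3']]|[Ex2' Hc3']].
  + have e8 : fs x = fs (ne c) by rewrite Ex.
    exfalso; apply: (hexT T1 _ _ Hwc' fc' T2').
    * lia.
    * by rewrite -Ex; exact: Ex2.
    * lia.
  + have e8 : fs x = fs (ne c) by rewrite Ex.
    exfalso; apply: (hexT T1 _ _ Hwc' fc' T2').
    * lia.
    * by rewrite -Ex; exact: Ex2.
    * lia.
  + have e9 : fs (ne x) = fs w by rewrite Ex2'.
    apply: (good_conc Htc T1 T2); left; lia.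
Qed.

End Basics.

Theorem lemma13p4 (D : finType) (ne ed : {perm D}) (s : D) :
  planar_PCC ne ed -> 42 <= fsize ne ed s ->
  forall v : D, C1 ne ed s v -> Dset ne ed s v -> C15 ne ed s v.
Proof.
move=> [[[edK _] loopf multi _ _] HK _ _] HN v HC1 HD.
have degH : forall z, (3 <= deg ne z)%N by move=> z; case: (HK z).
have curvH : forall z, (0 < curv ne ed z)%R by move=> z; case: (HK z).
by apply: (main_sec edK loopf multi degH curvH HN).
Qed.
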